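(* Let $m\geq 11$ and $k\geq 1$ be integers and let $c(x)=1+\sum_{j\in\{1,3,4,5\}}(x^j+x^{m-j})\in\mathbb{F}_2[x]$. Then $\gcd(c(x^k),x^m-1)=1$ if and only if $\gcd(m,3k)=\gcd(m,k)$.
   Context: All polynomials are over $\mathbb{F}_2$. *)

(* Defs.v *)
From HB Require Import structures.
From mathcomp Require Import all_boot all_order all_algebra.
Set Implicit Arguments. Unset Strict Implicit. Unset Printing Implicit Defensive.
Import GRing.Theory.
Local Open Scope ring_scope.

Definition cpoly (m : nat) : {poly 'F_2} :=
  1 + \sum_(j <- [:: 1%N; 3%N; 4%N; 5%N]) ('X^j + 'X^(m - j)).

(* Main.v *)
Require Import Defs.
From HB Require Import structures.
From mathcomp Require Import all_boot all_order all_algebra.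
From mathcomp Require Import ring zify.
Import GRing.Theory.
Local Open Scope ring_scope.

Lemma two0 : (2%:R : {poly 'F_2}) = 0.
Proof. by rewrite -polyC_natr (_ : 2%:R = 0 :> 'F_2) ?polyC0 //; apply/eqP. Qed.

Lemma idt (y : {poly 'F_2}) n : y^+5 * (1 + y + y^+3 + y^+4 + y^+5 + y^+(n+4) + y^+(n+2) + y^+(n+1) + y^+n)
  = (1+y+y^+2)^+5 + (y^+4+y^+2+y+1)*(y^+(n+5)-1).
Proof.
have -> : (1+y+y^+2)^+5 = 1+y+y^+2+y^+4+y^+5+y^+6+y^+8+y^+9+y^+10 + 2%:R * (2*y+7*y^+2+15*y^+3+22*y^+4+25*y^+5+22*y^+6+15*y^+7+7*y^+8+2*y^+9).
  ring.
rewrite two0 mul0r addr0 !exprD. ring.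
Qed.

Lemma compc (n k : nat) : cpoly (n + 5) \Po 'X^k =
  1 + 'X^k + ('X^k)^+3 + ('X^k)^+4 + ('X^k)^+5 + ('X^k)^+(n+4) + ('X^k)^+(n+2) + ('X^k)^+(n+1) + ('X^k)^+n.
Proof.
rewrite /cpoly !big_cons big_nil.
rewrite !(comp_polyD, comp_polyC, comp_Xn_poly) addr0 polyC1 -!exprM.
have -> : (n + 5 - 1 = n + 4)%N by lia.
have -> : (n + 5 - 3 = n + 2)%N by lia.
have -> : (n + 5 - 4 = n + 1)%N by lia.
have -> : (n + 5 - 5 = n)%N by lia.
rewrite !exprM. ring.
Qed.

Section Gen.
Variable F : fieldType.

Lemma dvdXsub (n t : nat) : ('X^n - 1 : {poly F}) %| 'X^(n * t) - 1.
Proof. by rewrite exprM [_ ^+ t - 1]subrX1 dvdp_mulIl. Qed.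

Lemma dvd_gcdX (d : {poly F}) a b : (0 < a)%N ->
  d %| 'X^a - 1 -> d %| 'X^b - 1 -> d %| 'X^(gcdn a b) - 1.
Proof.
move=> a0 ha hb; case: (egcdnP b a0) => km kn E _.
have h1 : d %| 'X^(a * km) - 1 by apply: dvdp_trans ha (dvdXsub _ _).
have h2 : d %| 'X^(b * kn) - 1 by apply: dvdp_trans hb (dvdXsub _ _).
have -> : ('X^(gcdn a b) - 1 : {poly F}) =
   ('X^(a * km) - 1) - 'X^(gcdn a b) * ('X^(b * kn) - 1).
  rewrite mulnC E exprD mulnC. ring.
by rewrite dvdp_sub // dvdp_mull.
Qed.

Lemma gcdX a b : (0 < a)%N -> gcdp ('X^a - 1 : {poly F}) ('X^b - 1) %= 'X^(gcdn a b) - 1.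
Proof.
move=> a0; apply/andP; split.
  by apply: dvd_gcdX => //; [apply: dvdp_gcdl | apply: dvdp_gcdr].
rewrite dvdp_gcd; apply/andP; split.
  by rewrite -{2}(divnK (dvdn_gcdl a b)) mulnC dvdXsub.
by rewrite -{2}(divnK (dvdn_gcdr a b)) mulnC dvdXsub.
Qed.

Lemma coprime_congr (P Q M : {poly F}) : M %| P - Q -> coprimep P M = coprimep Q M.
Proof.
move=> h; apply/coprimepP/coprimepP => H d dQ dM; apply: H => //.
  have -> : P = Q + (P - Q) by ring.
  by rewrite dvdp_add // (dvdp_trans dM).
have -> : Q = P - (P - Q) by ring.
by rewrite dvdp_sub // (dvdp_trans dM).
Qed.

End Gen.

Lemma step1L n k (hk : (0 < k)%N) : coprimep (cpoly (n + 5) \Po 'X^k) ('X^(n + 5) - 1 : {poly 'F_2})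
  = coprimep (1 + 'X^k + ('X^k)^+2 : {poly 'F_2}) ('X^(n + 5) - 1).
Proof.
set M : {poly 'F_2} := 'X^(n + 5) - 1.
set y : {poly 'F_2} := 'X^k.
set B := 1 + y + y^+2.
  rewrite compc -/y.
  have cy : coprimep (y ^+ 5) M.
    rewrite coprimep_pexpl // /y /M.
    rewrite coprimep_pexpl //; apply/Bezout_coprimepP.
    exists ('X^(n+4), -1) => /=.
    rewrite mulN1r -exprSr -addnS opprB addrC subrK; exact: eqpxx.
  rewrite -[coprimep B M](@coprimep_pexpl _ 5) //.
  apply/idP/idP.
    move=> h.
    have : coprimep (y ^+ 5 * (1 + y + y ^+ 3 + y ^+ 4 + y ^+ 5 + y ^+ (n + 4) + y ^+ (n + 2) + y ^+ (n + 1) + y ^+ n)) M.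
      by rewrite coprimepMl cy h.
    rewrite idt (@coprime_congr _ _ (B ^+ 5)) //.
    by rewrite (_ : forall a b : {poly 'F_2}, (a + b) - a = b); last (by move=> a b; ring); rewrite dvdp_mull // /y -exprM mulnC dvdXsub.
  move=> h.
  have : coprimep (y ^+ 5 * (1 + y + y ^+ 3 + y ^+ 4 + y ^+ 5 + y ^+ (n + 4) + y ^+ (n + 2) + y ^+ (n + 1) + y ^+ n)) M.
    rewrite idt (@coprime_congr _ _ (B ^+ 5)) //.
    by rewrite (_ : forall a b : {poly 'F_2}, (a + b) - a = b); last (by move=> a b; ring); rewrite dvdp_mull // /y -exprM mulnC dvdXsub.
  by rewrite coprimepMl => /andP[].
Qed.

Theorem proposition3 (m k : nat) (hm : (11 <= m)%N) (hk : (1 <= k)%N) :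
  coprimep (cpoly m \Po 'X^k) ('X^m - 1) <-> gcdn m (3 * k) = gcdn m k.
Proof.
set M : {poly 'F_2} := 'X^m - 1.
set y : {poly 'F_2} := 'X^k.
set B : {poly 'F_2} := 1 + y + y^+2.
set A : {poly 'F_2} := y - 1.
have m0 : (0 < m)%N by lia.
have step1 : coprimep (cpoly m \Po 'X^k) M = coprimep B M.
  have [n em] : exists n, m = (n + 5)%N by exists (m - 5)%N; lia.
  by rewrite /M /B /y em step1L.
rewrite step1.
have AB : A * B = 'X^(3 * k) - 1.
  rewrite /A /B /y mulnC exprM.
  by move: ('X^k : {poly 'F_2}) => z; ring.
have k3 : (0 < 3 * k)%N by lia.
have cAB : coprimep A B.
  apply/Bezout_coprimepP; exists (- y, 1) => /=.
  rewrite (_ : - y * A + 1 * B = 1 + 2%:R * y); last first.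
    have gen : forall z : {poly 'F_2}, - z * (z - 1) + 1 * (1 + z + z ^+ 2) = 1 + 2%:R * z by move=> z; ring.
    exact: gen.
  rewrite two0 mul0r addr0; exact: eqpxx.
split.
  move=> cB.
  have cB' : coprimep M B by rewrite coprimep_sym.
  have e := Gauss_gcdpl A cB'.
  rewrite AB in e.
  have e1 := gcdX 'F_2 (3 * k) m k3.
  have e2 := gcdX 'F_2 k m hk.
  have : ('X^(gcdn (3 * k) m) - 1 : {poly 'F_2}) %= 'X^(gcdn k m) - 1.
    rewrite eqp_sym in e1.
    apply: (eqp_trans e1).
    apply: (eqp_trans (gcdpC _ _)).
    apply: (eqp_trans e).
    apply: (eqp_trans (gcdpC _ _)).
    exact: e2.
  move/eqp_size; rewrite !size_Xn_sub_1 ?gcdn_gt0 ?k3 ?hk //.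
  by case; rewrite gcdnC [gcdn k m]gcdnC.
move=> eg; apply/coprimepP => d dB dM.
have dA : d %| A.
  have h3 : d %| 'X^(3 * k) - 1 by rewrite -AB dvdp_mull.
  have := @dvd_gcdX _ d _ m k3 h3 dM.
  rewrite gcdnC eg => h; apply: dvdp_trans h _.
  by rewrite /A /y -{2}(divnK (dvdn_gcdr m k)) mulnC dvdXsub.
by move/coprimepP: cAB; apply.
Qed.
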